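(* Let $q=2^h$ with $h\equiv 1\pmod 2$, let $$U=\left\{\left(x,y,x^q+y^{q^2},x^{q^2}+y^q+y^{q^2}\right): x,y\in\mathbb F_{q^4}\right\}\subseteq\mathbb F_{q^4}^4,$$ and let $\mathcal C$ be an $[8,4]_{q^4/q}$ code associated to $U$. Then the dual code $\mathcal C^\perp$ is equivalent to $\mathcal C$.
   Context: A code associated to $U$ is the $\mathbb F_{q^4}$-row space of the $4\times 8$ matrix whose columns are an $\mathbb F_q$-basis of $U$. The dual code is $\mathcal C^\perp=\{u\in\mathbb F_{q^4}^8: uv^\top=0\ \forall v\in\mathcal C\}$. Two codes $\mathcal C_1,\mathcal C_2\subseteq\mathbb F_{q^m}^n$ are (linearly) equivalent if $\mathcal C_2=\{vA: v\in\mathcal C_1\}$ for some $A\in\mathrm{GL}(n,q)$. *)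

(* Defs.v *)
From HB Require Import structures.
From mathcomp Require Import all_boot all_order all_algebra all_field.
Set Implicit Arguments. Unset Strict Implicit. Unset Printing Implicit Defensive.
Import GRing.Theory.
Local Open Scope ring_scope.

Section Defs.
Variable L : finFieldType.

(* x lies in the subfield F_q of L (for #|L| = q^4 this is exactly F_q) *)
Definition inFq (q : nat) (x : L) : bool := x ^+ q == x.

Definition Uvec (q : nat) (x y : L) : 'cV[L]_4 :=
  \col_(i < 4)
    match val i with
    | 0 => x
    | 1 => y
    | 2 => x ^+ q + y ^+ (q ^ 2)
    | _ => x ^+ (q ^ 2) + y ^+ q + y ^+ (q ^ 2)
    end.

Definition inU (q : nat) (v : 'cV[L]_4) : Prop := exists x y : L, v = Uvec q x y.

Definition Fq_basis_of_U (q n : nat) (G : 'M[L]_(4, n)) : Prop :=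
  [/\ forall j, inU q (col j G),
      forall c : 'I_n -> L, (forall j, inFq q (c j)) ->
        \sum_j c j *: col j G = 0 -> forall j, c j = 0
    & forall v, inU q v ->
        exists c : 'I_n -> L, (forall j, inFq q (c j)) /\ v = \sum_j c j *: col j G].

Definition code (m n : nat) (G : 'M[L]_(m, n)) : {set 'rV[L]_n} :=
  [set v | (v <= G)%MS].

Definition dual_code (n : nat) (C : {set 'rV[L]_n}) : {set 'rV[L]_n} :=
  [set u | [forall v in C, u *m v^T == 0]].

Definition lin_equiv (q n : nat) (C1 C2 : {set 'rV[L]_n}) : Prop :=
  exists A : 'M[L]_n,
    [/\ forall i j, inFq q (A i j), A \in unitmx & C2 = [set v *m A | v in C1]].

End Defs.

(* Main.v *)
Require Import Defs.
From HB Require Import structures.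
From mathcomp Require Import all_boot all_order all_algebra all_field.
Import GRing.Theory.
Local Open Scope ring_scope.
Set Implicit Arguments. Unset Strict Implicit. Unset Printing Implicit Defensive.

Lemma sqr_char2 (L : comNzRingType) (H : 2%N \in [pchar L]) (a b : L) :
  (a + b) ^+ 2 = a ^+ 2 + b ^+ 2.
Proof. by rewrite sqrrD -mulr_natr (pcharf0 H) mulr0 addr0. Qed.

Lemma frob_add (L : comNzRingType) (H : 2%N \in [pchar L]) (n : nat) (a b : L) :
  (a + b) ^+ (2 ^ n) = a ^+ (2 ^ n) + b ^+ (2 ^ n).
Proof.
elim: n => [|n IH]; first by rewrite !expr1.
by rewrite expnS mulnC !exprM IH sqr_char2.
Qed.

Definition frob (L : comNzRingType) (H : 2%N \in [pchar L]) (n : nat) (x : L) := x ^+ (2 ^ n).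

Lemma frob_is_nmod (L : comNzRingType) (H : 2%N \in [pchar L]) (n : nat) :
  nmod_morphism (frob H n).
Proof.
split; first by rewrite /frob expr0n expn_eq0.
by move=> x y; rewrite /frob frob_add.
Qed.

Lemma frob_is_monoid (L : comNzRingType) (H : 2%N \in [pchar L]) (n : nat) :
  monoid_morphism (frob H n).
Proof. by split; [rewrite /frob expr1n | move=> x y; rewrite /frob exprMn]. Qed.

HB.instance Definition _ (L : comNzRingType) (H : 2%N \in [pchar L]) (n : nat) :=
  GRing.isNmodMorphism.Build L L (frob H n) (frob_is_nmod H n).
HB.instance Definition _ (L : comNzRingType) (H : 2%N \in [pchar L]) (n : nat) :=
  GRing.isMonoidMorphism.Build L L (frob H n) (frob_is_monoid H n).


Definition mx01 (L : nzRingType) (m n : nat) (f : nat -> nat -> nat) : 'M[L]_(m, n) :=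
  \matrix_(i < m, j < n) (f i j)%:R.

Definition nmul (n : nat) (f g : nat -> nat -> nat) (i j : nat) : nat :=
  sumn [seq f i k * g k j | k <- iota 0 n].

Lemma mx01_mul (L : nzRingType) m n p f g :
  mx01 L m n f *m mx01 L n p g = mx01 L m p (nmul n f g).
Proof.
apply/matrixP => i j; rewrite !mxE /nmul sumnE big_map natr_sum.
have -> : iota 0 n = index_iota 0 n by rewrite /index_iota subn0.
rewrite big_mkord; apply: eq_bigr => k _; by rewrite !mxE natrM.
Qed.

Lemma mx01_tr (L : nzRingType) m n f :
  (mx01 L m n f)^T = mx01 L n m (fun i j => f j i).
Proof. by apply/matrixP => i j; rewrite !mxE. Qed.

Local Open Scope nat_scope.
Definition nchk (m n : nat) (f g : nat -> nat -> nat) : bool :=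
  all (fun i => all (fun j => f i j %% 2 == g i j %% 2) (iota 0 n)) (iota 0 m).

Local Open Scope ring_scope.
Lemma nat_mod2 (L : nzRingType) (H : 2%N \in [pchar L]) (k : nat) :
  k%:R = (k %% 2)%N%:R :> L.
Proof. by rewrite {1}(divn_eq k 2) natrD natrM (pcharf0 H) mulr0 add0r. Qed.

Lemma mx01_eq (L : nzRingType) (H : 2%N \in [pchar L]) m n f g :
  nchk m n f g -> mx01 L m n f = mx01 L m n g.
Proof.
move=> /allP Hc; apply/matrixP => i j; rewrite !mxE.
have Hi : nat_of_ord i \in iota 0 m by rewrite mem_iota /=.
have Hj : nat_of_ord j \in iota 0 n by rewrite mem_iota /=.
have /eqP E := allP (Hc i Hi) j Hj.
by rewrite (nat_mod2 H) E -(nat_mod2 H).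
Qed.

Lemma mx01_1 (L : nzRingType) n : mx01 L n n (fun i j => (i == j)) = 1%:M.
Proof. by apply/matrixP => i j; rewrite !mxE. Qed.

Lemma mx01_0 (L : nzRingType) m n : mx01 L m n (fun i j => 0%N) = 0.
Proof. by apply/matrixP => i j; rewrite !mxE. Qed.

Lemma map_mx01 (L : nzRingType) (f : {rmorphism L -> L}) m n g :
  map_mx f (mx01 L m n g) = mx01 L m n g.
Proof. by apply/matrixP => i j; rewrite !mxE rmorph_nat. Qed.

Local Open Scope nat_scope.
Definition phiN (i k : nat) : nat :=
  match i with
  | 0 => k == 0
  | 1 => k == 4
  | 2 => (k == 1) || (k == 6)
  | _ => (k == 2) || (k == 5) || (k == 6)
  end.

Definition psiN (i j : nat) : nat :=
  let t := (i %% 4 + 4 - j %% 4) %% 4 in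
  if (i < 4) && (j < 4) then t == 2
  else if (i < 4) || (j < 4) then odd t else t != 0.

Definition piN (k : nat) : nat := (k %/ 4) * 4 + (k %% 4).+1 %% 4.
Definition permN (k k' : nat) : nat := k' == piN k.

Definition selN (k j : nat) : nat :=
  match j with 0 => k == 0 | 1 => k == 4 | 2 => k == 1 | _ => k == 2 end.

Definition trN (f : nat -> nat -> nat) i j := f j i.

Local Open Scope ring_scope.
Lemma chk1 : nchk 4 4 (nmul 8 (nmul 8 phiN psiN) (trN phiN)) (fun _ _ => 0%N).
Proof. by vm_compute. Qed.
Lemma chk2 : nchk 8 8 (nmul 8 psiN psiN) (fun i j => (i == j) : nat).
Proof. by vm_compute. Qed.
Lemma chk3 : nchk 8 8 (nmul 8 (nmul 8 (trN permN) psiN) permN) psiN.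
Proof. by vm_compute. Qed.
Lemma chk4 : nchk 4 4 (nmul 8 phiN selN) (fun i j => (i == j) : nat).
Proof. by vm_compute. Qed.

Lemma poly_vanish (L : finFieldType) (q : nat) (w : 'I_4 -> L) :
  (1 < q)%N -> #|L| = (q ^ 4)%N ->
  (forall x : L, \sum_(a < 4) w a * x ^+ (q ^ a) = 0) -> forall a, w a = 0.
Proof.
move=> q1 cardL Hx b.
pose p : {poly L} := \sum_(a < 4) w a *: 'X^(q ^ a).
have pE x : p.[x] = \sum_(a < 4) w a * x ^+ (q ^ a).
  by rewrite /p horner_sum; apply: eq_bigr => a _; rewrite hornerZ hornerXn.
have p0 : p = 0.
  apply/eqP; apply/negPn/negP => pn0.
  have := max_poly_roots pn0 _ (enum_uniq L).
  have -> : all (root p) (enum L) by apply/allP => x _; rewrite /root pE Hx.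
  move=> /(_ isT); rewrite -cardE cardL => Hlt.
  have : (size p <= (q ^ 3).+1)%N.
    apply: (leq_trans (size_sum _ _ _)); apply/bigmax_leqP => a _.
    apply: (leq_trans (size_scale_leq _ _)); rewrite size_polyXn ltnS.
    by apply: leq_pexp2l; [apply: ltnW | rewrite -ltnS].
  move=> Hs; have := leq_trans Hlt Hs; rewrite ltnS expnS.
  have : (0 < q ^ 3)%N by rewrite expn_gt0 ltnW.
  move: (q ^ 3)%N => r r0; rewrite leqNgt; move/negP; apply.
  by rewrite -[X in (X < _)%N]mul1n ltn_pmul2r.
have := congr1 (fun p : {poly L} => p`_(q ^ b)) p0.
rewrite coef0 /p coef_sum (bigD1 b) //= coefZ coefXn eqxx mulr1 big1 ?addr0 //.
move=> a /negPf ab; rewrite coefZ coefXn eqn_exp2l //.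
by rewrite (inj_eq val_inj) eq_sym ab mulr0.
Qed.

Lemma pow_fix (L : finFieldType) (h : nat) (c : L) a :
  c ^+ (2 ^ h) = c -> c ^+ ((2 ^ h) ^ a) = c.
Proof.
move=> Hc; elim: a => [|a IH]; first by rewrite expr1.
by rewrite expnSr exprM IH Hc.
Qed.

Lemma pow_lin (L : finFieldType) (H : 2%N \in [pchar L]) (h : nat) n
  (c w : 'I_n -> L) a :
  (forall l, c l ^+ (2 ^ h) = c l) ->
  (\sum_l c l * w l) ^+ ((2 ^ h) ^ a) = \sum_l c l * w l ^+ ((2 ^ h) ^ a).
Proof.
move=> Hc; rewrite -expnM.
have E (x : L) : x ^+ (2 ^ (h * a)) = frob H (h * a) x by [].
rewrite E rmorph_sum; apply: eq_bigr => l _; rewrite rmorphM /= -!E expnM.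
by rewrite pow_fix.
Qed.

Definition Mof (L : nzRingType) (q : nat) (X Y : 'I_8 -> L) : 'M[L]_8 :=
  \matrix_(k < 8, l < 8) (if (k < 4)%N then X l else Y l) ^+ (q ^ (k %% 4)).

Lemma Mof_unit (L : finFieldType) (H : 2%N \in [pchar L]) (h : nat) (X Y : 'I_8 -> L) :
  (0 < h)%N -> #|L| = ((2 ^ h) ^ 4)%N ->
  (forall x y, exists c : 'I_8 -> L, [/\ forall l, c l ^+ (2 ^ h) = c l,
       x = \sum_l c l * X l & y = \sum_l c l * Y l]) ->
  Mof (2 ^ h) X Y \in unitmx.
Proof.
move=> h0 cardL Hsp; set q := (2 ^ h)%N.
have q1 : (1 < q)%N by rewrite /q -{1}(expn0 2) ltn_exp2l.
apply/negPn/negP => Mn.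
set M := Mof q X Y.
have : kermx M != 0 by rewrite kermx_eq0 row_free_unit.
case: (pickP (fun i => row i (kermx M) != 0)) => [i Hi _ | H0]; last first.
  move/eqP; apply; apply/row_matrixP => i.
  by move/negbFE: (H0 i) => /eqP ->; rewrite row0.
set z := row i (kermx M).
have zM : z *m M = 0 by rewrite /z -row_mul mulmx_ker row0.
have Fv x y : \sum_(k < 8) z 0 k * (if (k < 4)%N then x else y) ^+ (q ^ (k %% 4)) = 0.
  have [c [Hc -> ->]] := Hsp x y.
  transitivity (\sum_(k < 8) z 0 k * \sum_l c l *
      (if (k < 4)%N then X l else Y l) ^+ (q ^ (k %% 4))).
    apply: eq_bigr => k _; congr (_ * _); rewrite -pow_lin //.
    by case: ifP.
  rewrite (eq_bigr _ (fun k _ => mulr_sumr _ _ _ _)).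
  rewrite exchange_big /= big1 // => l _.
  transitivity (c l * (z *m M) 0 l); last by rewrite zM mxE mulr0.
  rewrite mxE mulr_sumr; apply: eq_bigr => k _.
  by rewrite /M !mxE mulrCA.
have zx (a : 'I_4) : z 0 (lshift 4 a) = 0.
  apply: (@poly_vanish L q (fun a => z 0 (lshift 4 a))) => // x.
  have := Fv x 0; rewrite (@big_split_ord _ _ _ 4 4) /=.
  rewrite [X in _ + X]big1 ?addr0; last first.
    move=> b _; rewrite expr0n.
    by rewrite expn_eq0 (negPf (lt0n_neq0 (ltnW q1))) mulr0.
  move=> E; rewrite -[RHS]E; apply: eq_bigr => b _; by rewrite /= ltn_ord modn_small.
have zy (a : 'I_4) : z 0 (rshift 4 a) = 0.
  apply: (@poly_vanish L q (fun a => z 0 (rshift 4 a))) => // y.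
  have := Fv 0 y; rewrite (@big_split_ord _ _ _ 4 4) /=.
  rewrite [X in X + _]big1 ?add0r; last first.
    move=> b _; rewrite /= ltn_ord expr0n.
    by rewrite expn_eq0 (negPf (lt0n_neq0 (ltnW q1))) mulr0.
  move=> E; rewrite -[RHS]E; apply: eq_bigr => b _.
  by rewrite /= modnDl modn_small.
move/negP: Hi; apply; apply/eqP/rowP => k; rewrite [RHS]mxE.
case: (ltnP k 4) => Hk.
  have -> : k = lshift 4 (Ordinal Hk) by apply: val_inj.
  by rewrite zx.
have Hk' : (k - 4 < 4)%N by rewrite ltn_subLR // (ltn_ord k).
have -> : k = rshift 4 (Ordinal Hk') by apply: val_inj; rewrite /= subnKC.
by rewrite zy.
Qed.

Lemma dual_mem (L : finFieldType) m n (G : 'M[L]_(m, n)) (u : 'rV[L]_n) :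
  (u \in dual_code (code G)) = (u *m G^T == 0).
Proof.
rewrite inE; apply/forallP/eqP.
  move=> Hv; apply/matrixP => i j.
  have := Hv (row j G); rewrite inE row_sub /= => /eqP E.
  transitivity ((u *m (row j G)^T) i 0); last by rewrite E !mxE.
  rewrite !mxE; apply: eq_bigr => k _; by rewrite !mxE.
move=> E v; apply/implyP; rewrite inE => Hv.
by rewrite -(mulmxKpV Hv) trmx_mul mulmxA E mul0mx.
Qed.

Lemma M_shift (L : finFieldType) (H : 2%N \in [pchar L]) (h : nat) (X Y : 'I_8 -> L) :
  #|L| = ((2 ^ h) ^ 4)%N ->
  map_mx (frob H h) (Mof (2 ^ h) X Y) = mx01 L 8 8 permN *m Mof (2 ^ h) X Y.
Proof.
move=> cardL; apply/matrixP => k l; rewrite !mxE /frob.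
rewrite !big_ord_recl big_ord0 /mx01 /Mof !mxE /=.
case: k => [[|[|[|[|[|[|[|[|//]]]]]]]] Hk] /=;
  rewrite ?mul0r ?mul1r ?add0r ?addr0 -exprM -?expnSr //.
all: by rewrite /bump /= -cardL expf_card expn0 expr1.
Qed.

Lemma G_eq (L : finFieldType) q (G : 'M[L]_(4, 8)) :
  (forall j, inU q (col j G)) ->
  G = mx01 L 4 8 phiN *m Mof q (fun l => G ord0 l) (fun l => G (lift ord0 ord0) l).
Proof.
move=> Hcol; apply/matrixP => i l.
have [x [y E]] := Hcol l.
have Gi i' : G i' l = Uvec q x y i' 0 by rewrite -E mxE.
rewrite mxE !big_ord_recl big_ord0 /mx01 /Mof !mxE !Gi /Uvec !mxE /=.
case: i => [[|[|[|[|//]]]] Hi] /=;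
  rewrite ?mul0r ?mul1r ?add0r ?addr0 ?expn0 ?expn1 ?expr1 //.
all: by rewrite /bump /= ?addrA.
Qed.

Unset Implicit Arguments.
Theorem proposition4p14 (L : finFieldType) (h : nat) :
  odd h -> #|L| = ((2 ^ h) ^ 4)%N ->
  forall G : 'M[L]_(4, 8), Fq_basis_of_U (2 ^ h) G ->
  lin_equiv (2 ^ h) (dual_code (code G)) (code G).
Proof.
move=> hodd cardL G [Hcol _ Hsp].
have h0 : (0 < h)%N by rewrite odd_gt0.
have H2 : 2%N \in [pchar L].
  by apply: (@card_finPcharP L 2 (h * 4)) => //; rewrite expnM.
have GE := G_eq Hcol.
set M := Mof _ _ _ in GE.
set Phi := mx01 L 4 8 phiN in GE.
set Psi := mx01 L 8 8 psiN.
set P := mx01 L 8 8 permN.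
have Munit : M \in unitmx.
  apply: Mof_unit => // x y.
  have [c [Hc E]] := Hsp (Uvec (2 ^ h) x y) (ex_intro _ x (ex_intro _ y erefl)).
  exists c; split.
  - by move=> l; apply/eqP; exact: Hc l.
  - have := congr1 (fun v : 'cV_4 => v ord0 0) E; rewrite /= summxE mxE /= => ->.
    by apply: eq_bigr => l _; rewrite !mxE.
  - have := congr1 (fun v : 'cV_4 => v (lift ord0 ord0) 0) E.
    rewrite /= summxE mxE /= => ->.
    by apply: eq_bigr => l _; rewrite !mxE.
have f1 : Phi *m Psi *m Phi^T = 0.
  by rewrite /Phi /Psi mx01_tr !mx01_mul -(mx01_0 L 4 4); exact: (mx01_eq H2 chk1).
have f2 : Psi *m Psi = 1%:M.
  by rewrite /Psi mx01_mul -mx01_1; exact: (mx01_eq H2 chk2).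
have f3 : P^T *m Psi *m P = Psi.
  by rewrite /P /Psi mx01_tr !mx01_mul; exact: (mx01_eq H2 chk3).
have f4 : Phi *m mx01 L 8 4 selN = 1%:M.
  by rewrite /Phi mx01_mul -mx01_1; exact: (mx01_eq H2 chk4).
set N := invmx M.
set B := N *m Psi *m N^T.
set A := M^T *m Psi *m M.
have MN : M *m N = 1%:M by exact: mulmxV.
have NM : N *m M = 1%:M by exact: mulVmx.
have BA : B *m A = 1%:M.
  rewrite /B /A -!mulmxA (mulmxA N^T) -trmx_mul MN trmx1 mul1mx.
  by rewrite (mulmxA Psi) f2 mul1mx NM.
have [Bu Au] := mulmx1_unit BA.
have Afix : map_mx (frob H2 h) A = A.
  rewrite /A !map_mxM -map_trmx M_shift // map_mx01 -/Psi -/P trmx_mul.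
  by rewrite -!mulmxA (mulmxA P^T) (mulmxA _ P) f3.
have rG : \rank G = 4%N.
  rewrite GE mxrankMfree ?row_free_unit //.
  apply/eqP; rewrite eqn_leq rank_leq_row /= -{1}(mxrank1 L 4) -f4.
  exact: mxrankM_maxl.
set K := kermx G^T.
have rK : \rank K = 4%N by rewrite mxrank_ker mxrank_tr rG.
have GBK : (G *m B <= K)%MS.
  rewrite sub_kermx GE /B trmx_mul.
  have -> : Phi *m M *m (N *m Psi *m N^T) *m (M^T *m Phi^T) = Phi *m Psi *m Phi^T.
    rewrite !mulmxA -(mulmxA Phi M N) MN mulmx1 -(mulmxA _ N^T M^T) -trmx_mul MN.
    by rewrite trmx1 mulmx1.
  by rewrite f1.
have rGB : \rank (G *m B) = 4%N by rewrite mxrankMfree ?row_free_unit.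
have KGB : (K <= G *m B)%MS.
  have /andP[_ ->] // : (G *m B == K)%MS.
  by rewrite -(mxrank_leqif_eq GBK).2 rGB rK.
have dualE u : (u \in dual_code (code G)) = (u <= G *m B)%MS.
  rewrite dual_mem -sub_kermx -/K; apply/idP/idP => Hu.
    exact: submx_trans Hu KGB.
  exact: submx_trans Hu GBK.
exists A; split => //.
  move=> i j; rewrite /inFq; apply/eqP.
  by have := congr1 (fun Z : 'M_8 => Z i j) Afix; rewrite mxE.
apply/setP => w; rewrite {1}/code inE; apply/idP/imsetP.
  move=> Hw; exists (w *m B); first by rewrite dualE submxMr.
  by rewrite -mulmxA BA mulmx1.
move=> [v Hv ->]; rewrite dualE in Hv.
apply: (submx_trans (submxMr A Hv)).
by rewrite -mulmxA BA mulmx1.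
Qed.
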